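(* Consider the following single-NFT sale model. A creator with cost $c\ge 0$ chooses a mint price $p_0\ge 0$ and a royalty rate $r\in[0,1]$. The end-buyer's valuation is a nonnegative random variable $V$ with finite mean $\mu=\mathbb{E}[V]$, whose distribution (but not realization) is known to both the creator and a speculator at the time of purchase. The speculator is risk neutral ($\eta_s=0$) and buys the NFT at price $p_0$ if and only if $(1-r)\mu-p_0\ge 0$; if he buys, he later resells it to the end-buyer at the realized value $V$, and the creator's profit is $p_0+rV-c$. If the speculator does not buy, the creator offers the NFT to the end-buyer at price $p_0$, who buys iff $V\ge p_0$, so the creator's profit is $p_0\mathbb{1}_{\{V\ge p_0\}}-c$. The creator is risk neutral ($\eta_c=0$) and maximizes expected profit. Then every pair $(p_0^*,r^* )$ with $r^*\in[0,1]$, $p_0^*\ge 0$ and $p_0^*=\mu(1-r^* )$ maximizes the creator's expected profit, and the maximal expected profit equals $\mu-c$. *)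

(* Defs.v *)
From HB Require Import structures.
From mathcomp Require Import all_boot all_order all_algebra.
From mathcomp Require Import all_classical all_reals all_analysis.
Set Implicit Arguments. Unset Strict Implicit. Unset Printing Implicit Defensive.
Import Order.TTheory GRing.Theory Num.Theory.
Local Open Scope ring_scope.

Definition speculator_buys {R : realType} (mu p0 r : R) : bool :=
  0 <= (1 - r) * mu - p0.

Definition creator_profit {d} {T : measurableType d} {R : realType}
  (V : T -> R) (mu c p0 r : R) : T -> R :=
  fun w => if speculator_buys mu p0 r then p0 + r * V w - c
           else p0 * ((p0 <= V w)%R : bool)%:R - c.

Definition expected_profit {d} {T : measurableType d} {R : realType}
  (P : probability T R) (V : T -> R) (mu c p0 r : R) : \bar R :=
  'E_P[creator_profit V mu c p0 r]%E.

(* Main.v *)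
Require Import Defs.
From HB Require Import structures.
From mathcomp Require Import all_boot all_order all_algebra.
From mathcomp Require Import all_classical all_reals all_analysis.
From mathcomp Require Import measurable_realfun.
From mathcomp Require Import ring lra.
Import Order.TTheory GRing.Theory Num.Theory.
Local Open Scope ring_scope.

Lemma mb_bool (R : realType) : measurable_fun setT (fun b : bool => (b%:R : R)).
Proof. by move=> _ Y _; rewrite setTI; exact: I. Qed.

Lemma V_Lfun (d : measure_display) (T : measurableType d) (R : realType)
  (P : probability T R) (V : T -> R) (mu : R)
  (mV : measurable_fun setT V) (V_ge0 : forall w, 0 <= V w)
  (Emu : 'E_P[V]%E = mu%:E) : V \in Lfun P 1.
Proof.
apply/Lfun1_integrable; apply/integrableP; split.
  exact/measurable_EFinP.
under eq_integral => x _ do rewrite /= ger0_norm //.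
by move: Emu; rewrite unlock => ->; exact: ltry.
Qed.

Arguments V_Lfun {d T R P V mu}.

Lemma E_affine (d : measure_display) (T : measurableType d) (R : realType)
  (P : probability T R) (V : T -> R) (mu : R)
  (mV : measurable_fun setT V) (V_ge0 : forall w, 0 <= V w)
  (Emu : 'E_P[V]%E = mu%:E) (a b : R) :
  ('E_P[fun w => (a + b * V w)%R])%E = (a + b * mu)%:E.
Proof.
have VL := V_Lfun mV V_ge0 Emu.
have E : (fun w => a + b * V w) = (cst a \+ (b \o* V))%R.
  by apply: funext => w /=; rewrite mulrC.
rewrite E.
rewrite expectationD //; last exact: Lfun_scale.
  by rewrite expectationZl // expectation_cst Emu -EFinM -EFinD.
exact: Lfun_cst.
Qed.

Arguments E_affine {d T R P V mu}.

Theorem theorem1 (d : measure_display) (T : measurableType d) (R : realType)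
  (P : probability T R) (V : T -> R) (mu c : R)
  (mV : measurable_fun setT V) (V_ge0 : forall w, 0 <= V w)
  (Emu : 'E_P[V]%E = mu%:E) (c_ge0 : 0 <= c)
  (r0 p0 : R) (r0_ge0 : 0 <= r0) (r0_le1 : r0 <= 1) (p0_ge0 : 0 <= p0)
  (p0_def : p0 = mu * (1 - r0)) :
  (forall p r : R, 0 <= p -> 0 <= r -> r <= 1 ->
     (expected_profit P V mu c p r <= expected_profit P V mu c p0 r0)%E) /\
  expected_profit P V mu c p0 r0 = (mu - c)%:E.
Proof.
have VL := V_Lfun mV V_ge0 Emu.
have E0 : expected_profit P V mu c p0 r0 = (mu - c)%:E.
  rewrite /expected_profit /creator_profit /speculator_buys.
  have -> : (0 <= (1 - r0) * mu - p0) = true by rewrite p0_def mulrC subrr lexx.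
  have -> : (fun w => p0 + r0 * V w - c) = (fun w => (p0 - c) + r0 * V w).
    by apply: funext => w; ring.
  rewrite (E_affine mV V_ge0 Emu); congr (_%:E); rewrite p0_def; ring.
split => // p r p_ge0 r_ge0 r_le1; rewrite E0.
rewrite /expected_profit /creator_profit /speculator_buys.
case hb : (0 <= (1 - r) * mu - p).
  have -> : (fun w => p + r * V w - c) = (fun w => (p - c) + r * V w).
    by apply: funext => w; ring.
  rewrite (E_affine mV V_ge0 Emu) lee_fin; lra.
set g := fun w => p * ((p <= V w)%R : bool)%:R.
have mg : measurable_fun setT g.
  apply: measurable_funM => //.
  apply: (measurableT_comp (mb_bool R)).
  exact: measurable_fun_ler.
have g0 : forall w, 0 <= g w by move=> w; rewrite /g mulr_ge0.
have gV : forall w, g w <= V w.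
  move=> w; rewrite /g; have [h|h] := leP p (V w); rewrite ?mulr1 ?mulr0 //.
have gL : g \in Lfun P 1.
  apply/Lfun1_integrable; apply/integrableP; split; first exact/measurable_EFinP.
  apply: (le_lt_trans _ (ltry mu)); rewrite -Emu unlock.
  apply: ge0_le_integral => //.
  - apply: measurableT_comp => //; exact/measurable_EFinP.
  - exact/measurable_EFinP.
  - by move=> x _ /=; rewrite lee_fin ger0_norm.
have -> : (fun w => g w - c) = (g \- cst c)%R by apply: funext.
rewrite expectationB //; last exact: Lfun_cst.
rewrite expectation_cst EFinB; apply: leeB => //.
rewrite -Emu; apply: expectation_le => //.
by apply: aeW => w; exact: gV.
Qed.
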